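(* Let $(S,\circ)$ be a right loop with identity $1$, with group torsion $G_S$ and associated group $G_SS\le\mathrm{Sym}(S)$, and let $\sigma(S)$ be the stability relation on $S$. Then $N_{G_SS}(N_{G_SS}(G_S))=G_SS$ if and only if $\sigma(S)$ is a congruence on $S$ and, for all $y,z\in S$, $\{(x,\,x\,\theta^S f^S(y,z)) \mid x \in S\} \subseteq \sigma(S)$.
   Context: A right loop is a set $S$ with a binary operation $\circ$ having a two-sided identity $1$ such that for all $a,b\in S$ the equation $X\circ a=b$ has a unique solution $X\in S$. A right subloop of $S$ is a nonempty subset which is a right loop under the induced operation. A congruence on $S$ is an equivalence relation $R\subseteq S\times S$ which is a right subloop of $S\times S$ (with componentwise operation $(a,b)\circ(c,d)=(a\circ c,b\circ d)$). Products in $\mathrm{Sym}(S)$ follow the convention $(rs)(x)=s(r(x))$. For $u\in S$, $R_u\in\mathrm{Sym}(S)$ is $R_u(x)=x\circ u$, and $G_SS=\langle R_x : x\in S\rangle\le\mathrm{Sym}(S)$; $S$ is identified with $\{R_x: x\in S\}\subseteq G_SS$. For $y,z\in S$, $f^S(y,z)\in \mathrm{Sym}(S)$ is defined by: $f^S(y,z)(x)$ is the unique solution $X$ of $X\circ(y\circ z)=(x\circ y)\circ z$ (equivalently $f^S(y,z)=R_yR_zR_{y\circ z}^{-1}$). The group torsion $G_S$ is the subgroup of $\mathrm{Sym}(S)$ generated by all $f^S(y,z)$; it is a subgroup of $G_SS$. $G_S$ acts on $S$ via $x\,\theta^S h=h(x)$. $G_SS$ acts on $S$ by $x\star p=p(x)$,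 $\mathrm{stab}(G_SS,u)$ denotes the stabilizer of $u$, and the stability relation is $\sigma(S)=\{(x,y)\in S\times S \mid \mathrm{stab}(G_SS,x)=\mathrm{stab}(G_SS,y)\}$. *)

(* Defs.v *)
(* Permutations of S are represented as functions S -> S; all subgroup
   memberships below are extensional (stated pointwise), so no funext is
   needed.  Product convention: (r s)(x) = s (r x). *)

Section RightLoops.
Context {S : Type}.
Variable op : S -> S -> S.
Variable e : S.

Definition is_right_loop : Prop :=
  (forall a, op e a = a /\ op a e = a) /\
  (forall a b, exists X, op X a = b /\ forall Y, op Y a = b -> Y = X).

Definition right_subloop {T : Type} (opT : T -> T -> T) (P : T -> Prop) : Prop :=
  (exists t, P t) /\
  (forall a b, P a -> P b -> P (opT a b)) /\
  (exists u, P u /\ forall a, P a -> opT u a = a /\ opT a u = a) /\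
  (forall a b, P a -> P b ->
     exists X, (P X /\ opT X a = b) /\ forall Y, P Y -> opT Y a = b -> Y = X).

Definition pair_op (p q : S * S) : S * S := (op (fst p) (fst q), op (snd p) (snd q)).

Definition is_equivalence (R : S -> S -> Prop) : Prop :=
  (forall x, R x x) /\ (forall x y, R x y -> R y x) /\
  (forall x y z, R x y -> R y z -> R x z).

Definition congruence (R : S -> S -> Prop) : Prop :=
  is_equivalence R /\ right_subloop pair_op (fun p => R (fst p) (snd p)).

(* Subgroup of Sym(S) generated by a set X of permutations:
   words p1^{+-1} ... pn^{+-1}.  r = p q : r x = q (p x);
   r = p^{-1} q : r (p x) = q x. *)
Inductive gen (X : (S -> S) -> Prop) : (S -> S) -> Prop :=
| gen_id r : (forall x, r x = x) -> gen X r
| gen_mul p q r : X p -> gen X q -> (forall x, r x = q (p x)) -> gen X r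
| gen_inv p q r : X p -> gen X q -> (forall x, r (p x) = q x) -> gen X r.

Definition Rmul (u : S) : S -> S := fun x => op x u.

Definition is_fS (y z : S) (h : S -> S) : Prop :=
  forall x, op (h x) (op y z) = op (op x y) z.

Definition GSS : (S -> S) -> Prop :=
  gen (fun p => exists u, forall x, p x = Rmul u x).

Definition GS : (S -> S) -> Prop :=
  gen (fun h => exists y z, is_fS y z h).

(* N_G(H) = { g in G | g H g^{-1} = H }, where g h g^{-1} is x |-> g^{-1}(h(g x)) *)
Definition normalizer (G H : (S -> S) -> Prop) (g : S -> S) : Prop :=
  G g /\
  (forall h, H h -> exists h', H h' /\ forall x, h (g x) = g (h' x)) /\
  (forall h', H h' -> exists h, H h /\ forall x, h (g x) = g (h' x)).

Definition stab (u : S) (p : S -> S) : Prop := GSS p /\ p u = u.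

Definition sigma (x y : S) : Prop := forall p, stab x p <-> stab y p.

End RightLoops.

(* Main.v *)
Require Import Defs.
From Stdlib Require Import ClassicalEpsilon.

Lemma gen_ext {S} (X : (S->S)->Prop) r r' : gen X r -> (forall x, r' x = r x) -> gen X r'.
Proof.
  intros H E. destruct H as [r H0|p q r Hp Hq H0|p q r Hp Hq H0].
  - apply gen_id. intro x. rewrite E. apply H0.
  - eapply gen_mul; eauto. intro x. rewrite E. apply H0.
  - eapply gen_inv; eauto. intro x. rewrite E. apply H0.
Qed.

Lemma gen_comp {S} (X : (S->S)->Prop) a b : gen X a -> gen X b -> gen X (fun x => b (a x)).
Proof.
  intros Ha Hb. induction Ha as [a H0|p q a Hp Hq IH H0|p q a Hp Hq IH H0].
  - apply (gen_ext _ b); auto. intro x; simpl; rewrite H0; reflexivity.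
  - apply (gen_mul _ p (fun x => b (q x))); auto. intro x; simpl; rewrite H0; reflexivity.
  - apply (gen_inv _ p (fun x => b (q x))); auto. intro x; simpl; rewrite H0; reflexivity.
Qed.

Lemma gen_X {S} (X : (S->S)->Prop) p : X p -> gen X p.
Proof. intro Hp. apply (gen_mul _ p (fun x => x)); auto. apply gen_id; auto. Qed.

Lemma gen_inverse {S} (X : (S->S)->Prop) :
  (forall p, X p -> exists pinv, (forall x, pinv (p x) = x) /\ (forall x, p (pinv x) = x)) ->
  forall a, gen X a -> exists ainv, gen X ainv /\ (forall x, ainv (a x) = x) /\ (forall x, a (ainv x) = x).
Proof.
  intros HX a Ha. induction Ha as [a H0|p q a Hp Hq IH H0|p q a Hp Hq IH H0].
  - exists (fun x => x). split. apply gen_id; auto. split; intro x; rewrite H0; auto.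
  - destruct IH as [qi [Hqi [Hq1 Hq2]]]. destruct (HX p Hp) as [pi [Hp1 Hp2]].
    exists (fun x => pi (qi x)). split.
    + apply gen_comp; auto. apply (gen_inv _ p (fun x=>x)); auto. apply gen_id; auto.
    + split; intro x; simpl; rewrite ?H0.
      * rewrite Hq1, Hp1; auto.
      * rewrite Hp2, Hq2; auto.
  - destruct IH as [qi [Hqi [Hq1 Hq2]]]. destruct (HX p Hp) as [pi [Hp1 Hp2]].
    exists (fun x => p (qi x)). split.
    + apply gen_comp; auto. apply gen_X; auto.
    + split; intro x; simpl.
      * replace (a x) with (q (pi x)) by (rewrite <- H0, Hp2; reflexivity).
        rewrite Hq1, Hp2; auto.
      * rewrite H0, Hq2; auto.
Qed.

Lemma gen_mono {S} (X Y : (S->S)->Prop) :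
  (forall p, X p -> gen Y p /\ exists pinv, gen Y pinv /\ forall x, p (pinv x) = x) ->
  forall a, gen X a -> gen Y a.
Proof.
  intros HXY a Ha. induction Ha as [a H0|p q a Hp Hq IH H0|p q a Hp Hq IH H0].
  - apply gen_id; auto.
  - destruct (HXY p Hp) as [Gp _]. apply (gen_ext _ _ _ (gen_comp _ _ _ Gp IH)).
    intro x; rewrite H0; reflexivity.
  - destruct (HXY p Hp) as [Gp [pi [Gpi Hpi]]].
    apply (gen_ext _ _ _ (gen_comp _ _ _ Gpi IH)).
    intro x; simpl. rewrite <- H0, Hpi; reflexivity.
Qed.

Definition rdiv {S} (op : S->S->S) (e:S) (HS : is_right_loop op e) (b a : S) : S :=
  proj1_sig (constructive_indefinite_description _ (proj2 HS a b)).

Lemma rdiv_spec {S} op (e:S) (HS : is_right_loop op e) b a : op (rdiv op e HS b a) a = b.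
Proof.
  unfold rdiv. destruct (constructive_indefinite_description _ _) as [X [H1 H2]]. exact H1.
Qed.

Lemma rdiv_uniq {S} op (e:S) (HS : is_right_loop op e) b a X : op X a = b -> X = rdiv op e HS b a.
Proof.
  unfold rdiv. destruct (constructive_indefinite_description _ _) as [Y [H1 H2]]. simpl. auto.
Qed.

Lemma rcancel {S} op (e:S) (HS : is_right_loop op e) X Y a : op X a = op Y a -> X = Y.
Proof.
  intro H. rewrite (rdiv_uniq op e HS (op Y a) a X H).
  symmetry. apply rdiv_uniq. reflexivity.
Qed.

Lemma lid {S} op (e:S) (HS : is_right_loop op e) a : op e a = a.
Proof. apply (proj1 (proj1 HS a)). Qed.
Lemma rid {S} op (e:S) (HS : is_right_loop op e) a : op a e = a.
Proof. apply (proj2 (proj1 HS a)). Qed.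

Definition fS {S} op (e:S) (HS : is_right_loop op e) (y z : S) : S -> S :=
  fun x => rdiv op e HS (op (op x y) z) (op y z).
Definition fSinv {S} op (e:S) (HS : is_right_loop op e) (y z : S) : S -> S :=
  fun x => rdiv op e HS (rdiv op e HS (op x (op y z)) z) y.

Lemma fS_is {S} op (e:S) (HS : is_right_loop op e) y z : is_fS op y z (fS op e HS y z).
Proof. intro x. unfold fS. apply rdiv_spec. Qed.

Lemma is_fS_eq {S} op (e:S) (HS : is_right_loop op e) y z h : is_fS op y z h -> forall x, h x = fS op e HS y z x.
Proof. intros H x. apply (rcancel op e HS _ _ (op y z)). rewrite H, fS_is. reflexivity. Qed.

Lemma fSinv_l {S} op (e:S) (HS : is_right_loop op e) y z h : is_fS op y z h -> forall x, fSinv op e HS y z (h x) = x.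
Proof.
  intros H x. unfold fSinv. rewrite H.
  symmetry. apply rdiv_uniq. apply rdiv_uniq. reflexivity.
Qed.

Lemma fSinv_r {S} op (e:S) (HS : is_right_loop op e) y z h : is_fS op y z h -> forall x, h (fSinv op e HS y z x) = x.
Proof.
  intros H x. apply (rcancel op e HS _ _ (op y z)). rewrite H. unfold fSinv.
  rewrite !rdiv_spec. reflexivity.
Qed.

Lemma fS_e {S} op (e:S) (HS : is_right_loop op e) y z h : is_fS op y z h -> h e = e.
Proof.
  intros H. apply (rcancel op e HS _ _ (op y z)). rewrite H, !(lid op e HS). reflexivity.
Qed.

Lemma G_R {S} (op : S -> S -> S) (e:S) (u : S) : GSS op (Rmul op u).
Proof. apply gen_X. exists u. reflexivity. Qed.

Lemma G_Rinv {S} op (e:S) (HS : is_right_loop op e) u : GSS op (fun x => rdiv op e HS x u).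
Proof.
  apply (gen_inv _ (Rmul op u) (fun x => x)). exists u; reflexivity. apply gen_id; auto.
  intro x. unfold Rmul. symmetry. apply rdiv_uniq. reflexivity.
Qed.

Lemma G_inverse {S} op (e:S) (HS : is_right_loop op e) g : GSS op g ->
  exists gi, GSS op gi /\ (forall x, gi (g x) = x) /\ (forall x, g (gi x) = x).
Proof.
  apply gen_inverse. intros p [u Hu]. exists (fun x => rdiv op e HS x u). split; intro x.
  - rewrite Hu. symmetry. apply rdiv_uniq. reflexivity.
  - rewrite Hu. unfold Rmul. apply rdiv_spec.
Qed.

Lemma H_inverse {S} op (e:S) (HS : is_right_loop op e) g : GS op g ->
  exists gi, GS op gi /\ (forall x, gi (g x) = x) /\ (forall x, g (gi x) = x).
Proof.
  apply gen_inverse. intros p [y [z Hp]]. exists (fSinv op e HS y z). split.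
  - apply (fSinv_l op e HS y z p Hp).
  - apply (fSinv_r op e HS y z p Hp).
Qed.

Lemma H_G {S} op (e:S) (HS : is_right_loop op e) h : GS op h -> GSS op h.
Proof.
  apply gen_mono. intros p [y [z Hp]]. split.
  - eapply gen_ext.
    + apply (gen_comp _ _ _ (gen_comp _ _ _ (G_R op e y) (G_R op e z)) (G_Rinv op e HS (op y z))).
    + intro x. simpl. rewrite (is_fS_eq op e HS y z p Hp). reflexivity.
  - exists (fSinv op e HS y z). split.
    + eapply gen_ext.
      * apply (gen_comp _ _ _ (gen_comp _ _ _ (G_R op e (op y z)) (G_Rinv op e HS z)) (G_Rinv op e HS y)).
      * intro x. reflexivity.
    + apply (fSinv_r op e HS y z p Hp).
Qed.

Lemma H_fix {S} op (e:S) (HS : is_right_loop op e) h : GS op h -> h e = e.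
Proof.
  intro Hh. induction Hh as [a H0|p q a [y [z Hp]] Hq IH H0|p q a [y [z Hp]] Hq IH H0].
  - apply H0.
  - rewrite H0, (fS_e op e HS y z p Hp). exact IH.
  - transitivity (a (p e)). rewrite (fS_e op e HS y z p Hp). reflexivity. rewrite H0. exact IH.
Qed.

Lemma GL {S} op (e:S) (HS : is_right_loop op e) y z p : is_fS op y z p ->
  forall a, exists p', GS op p' /\ forall x, p (op x a) = op (p' x) (p a).
Proof.
  intros Hp a.
  exists (fun x => fSinv op e HS (p a) (op y z) (fS op e HS (op a y) z (fS op e HS a y x))).
  split.
  - apply gen_comp. apply gen_comp. apply gen_X. exists a, y. apply fS_is.
    apply gen_X. exists (op a y), z. apply fS_is.
    apply (gen_inv _ (fS op e HS (p a) (op y z)) (fun x => x)).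
    exists (p a), (op y z). apply fS_is. apply gen_id; auto.
    intro x. apply (fSinv_l op e HS _ _ _ (fS_is op e HS _ _)).
  - intro x. apply (rcancel op e HS _ _ (op y z)).
    rewrite Hp. rewrite <- (fS_is op e HS (p a) (op y z)).
    rewrite (fSinv_r op e HS _ _ _ (fS_is op e HS _ _)).
    rewrite Hp. rewrite (fS_is op e HS (op a y) z). rewrite (fS_is op e HS a y).
    reflexivity.
Qed.

Lemma KL {S} op (e:S) (HS : is_right_loop op e) h : GS op h ->
  forall a, exists h', GS op h' /\ forall x, h (op x a) = op (h' x) (h a).
Proof.
  intro Hh. induction Hh as [h H0|p q h Hp Hq IH H0|p q h Hp Hq IH H0]; intro a.
  - exists (fun x => x). split. apply gen_id; auto. intro x. rewrite !H0. reflexivity.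
  - destruct Hp as [y [z Hp]]. destruct (GL op e HS y z p Hp a) as [p' [Hp' Ep']].
    destruct (IH (p a)) as [q' [Hq' Eq']].
    exists (fun x => q' (p' x)). split. apply gen_comp; auto.
    intro x. rewrite !H0, Ep', Eq'. reflexivity.
  - destruct Hp as [y [z Hp]].
    set (b := fSinv op e HS y z a).
    assert (Eb : p b = a) by apply (fSinv_r op e HS y z p Hp).
    destruct (GL op e HS y z p Hp b) as [p' [Hp' Ep']].
    destruct (H_inverse op e HS p' Hp') as [p3 [Hp3 [E31 E32]]].
    destruct (IH b) as [q' [Hq' Eq']].
    exists (fun x => q' (p3 x)). split. apply gen_comp; auto.
    intro x.
    assert (E : op x a = p (op (p3 x) b)) by (rewrite Ep', E32, Eb; reflexivity).
    rewrite E, H0, Eq', <- Eb, H0. reflexivity.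
Qed.

Lemma DL {S} op (e:S) (HS : is_right_loop op e) g : GSS op g ->
  exists h c, GS op h /\ forall x, g x = op (h x) c.
Proof.
  intro Hg. induction Hg as [g H0|p q g [a Hp] Hq IH H0|p q g [a Hp] Hq IH H0].
  - exists (fun x => x), e. split. apply gen_id; auto. intro x. rewrite H0, (rid op e HS). reflexivity.
  - destruct IH as [q0 [c [Hq0 Eq0]]].
    destruct (KL op e HS q0 Hq0 a) as [q1 [Hq1 Eq1]].
    exists (fun x => fS op e HS (q0 a) c (q1 x)), (op (q0 a) c). split.
    + apply gen_comp; auto. apply gen_X. exists (q0 a), c. apply fS_is.
    + intro x. rewrite H0, Hp. unfold Rmul. rewrite Eq0, Eq1. rewrite (fS_is op e HS). reflexivity.
  - destruct IH as [q0 [c [Hq0 Eq0]]].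
    set (b := rdiv op e HS e a).
    assert (Eb : op b a = e) by apply rdiv_spec.
    destruct (KL op e HS q0 Hq0 b) as [q1 [Hq1 Eq1]].
    exists (fun x => fS op e HS (q0 b) c (q1 (fSinv op e HS b a x))), (op (q0 b) c). split.
    + apply gen_comp. apply gen_comp. 
      apply (gen_inv _ (fS op e HS b a) (fun x => x)).
      exists b, a. apply fS_is. apply gen_id; auto.
      intro x. apply (fSinv_l op e HS _ _ _ (fS_is op e HS _ _)).
      auto.
      apply gen_X. exists (q0 b), c. apply fS_is.
    + intro x.
      assert (E : x = p (op (fSinv op e HS b a x) b)).
      { rewrite Hp. unfold Rmul. rewrite <- (fS_is op e HS b a).
        rewrite (fSinv_r op e HS _ _ _ (fS_is op e HS _ _)), Eb, (rid op e HS). reflexivity. }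
      rewrite E at 1. rewrite H0, Eq0, Eq1, (fS_is op e HS). reflexivity.
Qed.

Lemma sig_refl {S} (op : S->S->S) x : sigma op x x.
Proof. intro p. tauto. Qed.
Lemma sig_sym {S} (op : S->S->S) x y : sigma op x y -> sigma op y x.
Proof. intros H p. specialize (H p). tauto. Qed.
Lemma sig_trans {S} (op : S->S->S) x y z : sigma op x y -> sigma op y z -> sigma op x z.
Proof. intros H1 H2 p. specialize (H1 p). specialize (H2 p). tauto. Qed.

Lemma sig_G {S} op (e:S) (HS : is_right_loop op e) g x y :
  GSS op g -> sigma op x y -> sigma op (g x) (g y).
Proof.
  intros Hg Hxy. destruct (G_inverse op e HS g Hg) as [gi [Hgi [E1 E2]]].
  assert (K : forall u v, sigma op u v -> forall p, stab op (g u) p -> stab op (g v) p).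
  { intros u v Huv p [Gp Hp]. split; auto.
    assert (Gp' : GSS op (fun w => gi (p (g w)))).
    { apply gen_comp; auto. apply gen_comp; auto. }
    assert (S1 : stab op u (fun w => gi (p (g w)))).
    { split; auto. simpl. rewrite Hp, E1. reflexivity. }
    apply Huv in S1. destruct S1 as [_ S1]. simpl in S1.
    rewrite <- (E2 (p (g v))), S1. reflexivity. }
  intro p. split; apply K; auto. apply sig_sym; auto.
Qed.

Lemma St1 {S} op (e:S) (HS : is_right_loop op e) g : GSS op g -> g e = e -> GS op g.
Proof.
  intros Hg He. destruct (DL op e HS g Hg) as [h [c [Hh Eh]]].
  assert (Ec : c = e).
  { rewrite Eh, (H_fix op e HS h Hh), (lid op e HS) in He. exact He. }
  apply (gen_ext _ h); auto. intro x. rewrite Eh, Ec, (rid op e HS). reflexivity.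
Qed.

Lemma N_char {S} op (e:S) (HS : is_right_loop op e) g :
  normalizer (GSS op) (GS op) g <-> GSS op g /\ sigma op (g e) e.
Proof.
  split.
  - intros [Hg [C1 C2]]. split; auto.
    destruct (G_inverse op e HS g Hg) as [gi [Hgi [E1 E2]]].
    intro p. split.
    + intros [Gp Hp]. split; auto.
      assert (Hh' : GS op (fun w => gi (p (g w)))).
      { apply (St1 op e HS). apply gen_comp; auto. apply gen_comp; auto. simpl. rewrite Hp, E1. reflexivity. }
      destruct (C2 _ Hh') as [h [Hh Eh]].
      transitivity (h e). 2: apply (H_fix op e HS h Hh).
      rewrite <- (E2 e). rewrite Eh, !E2. reflexivity.
    + intros [Gp Hp]. split; auto.
      destruct (C1 p (St1 op e HS p Gp Hp)) as [h' [Hh' Eh']].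
      rewrite Eh', (H_fix op e HS h' Hh'). reflexivity.
  - intros [Hg Hs]. destruct (G_inverse op e HS g Hg) as [gi [Hgi [E1 E2]]].
    split; auto. split.
    + intros h Hh. exists (fun w => gi (h (g w))). split.
      * apply (St1 op e HS). apply gen_comp; auto. apply gen_comp; auto. apply (H_G op e HS); auto.
        simpl. destruct (proj2 (Hs h)) as [_ Eh]. split. apply (H_G op e HS); auto.
        apply (H_fix op e HS); auto. rewrite Eh, E1. reflexivity.
      * intro x. rewrite E2. reflexivity.
    + intros h' Hh'. exists (fun w => g (h' (gi w))). split.
      * apply (St1 op e HS). apply gen_comp; auto. apply gen_comp; auto. apply (H_G op e HS); auto.
        simpl. 
        assert (Hs' : sigma op e (gi e)).
        { pose proof (sig_G op e HS gi _ _ Hgi Hs) as T. rewrite E1 in T. exact T. }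
        destruct (proj1 (Hs' h')) as [_ Eh]. split. apply (H_G op e HS); auto.
        apply (H_fix op e HS); auto. rewrite Eh, E2. reflexivity.
      * intro x. rewrite E1. reflexivity.
Qed.

Lemma H_sigma {S} op (e:S) (HS : is_right_loop op e) :
  (forall y z h, is_fS op y z h -> forall x, sigma op x (h x)) ->
  forall h, GS op h -> forall x, sigma op x (h x).
Proof.
  intros Hf h Hh. induction Hh as [h H0|p q h [y [z Hp]] Hq IH H0|p q h [y [z Hp]] Hq IH H0]; intro x.
  - rewrite H0. apply sig_refl.
  - rewrite H0. apply (sig_trans _ _ (p x)). apply (Hf y z p Hp). apply IH.
  - set (w := fSinv op e HS y z x).
    assert (Ew : p w = x) by apply (fSinv_r op e HS y z p Hp).
    rewrite <- Ew, H0. apply (sig_trans _ _ w). apply sig_sym, (Hf y z p Hp). apply IH.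
Qed.

Lemma shift {S} op (e:S) (HS : is_right_loop op e) :
  (forall n, GSS op n -> sigma op (n e) e -> forall x, sigma op (n x) x) ->
  forall b b', sigma op b b' -> forall x, sigma op (op x b) (op x b').
Proof.
  intros Kn b b' Hb x.
  set (n := fun w => rdiv op e HS (op w b) b').
  assert (Gn : GSS op n) by exact (gen_comp _ (Rmul op b) (fun x => rdiv op e HS x b') (G_R op e b) (G_Rinv op e HS b')).
  assert (Hn : sigma op (n e) e).
  { unfold n. rewrite (lid op e HS).
    pose proof (sig_G op e HS _ _ _ (G_Rinv op e HS b') Hb) as T. simpl in T.
    rewrite <- (rdiv_uniq op e HS b' b' e (lid op e HS b')) in T. exact T. }
  pose proof (sig_G op e HS _ _ _ (G_R op e b') (Kn n Gn Hn x)) as T.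
  unfold Rmul, n in T. rewrite rdiv_spec in T. exact T.
Qed.

Lemma shift_div {S} op (e:S) (HS : is_right_loop op e) :
  (forall n, GSS op n -> sigma op (n e) e -> forall x, sigma op (n x) x) ->
  forall a a', sigma op a a' -> forall x, sigma op (rdiv op e HS x a) (rdiv op e HS x a').
Proof.
  intros Kn a a' Ha x.
  pose proof (shift op e HS Kn a a' Ha (rdiv op e HS x a)) as T.
  rewrite rdiv_spec in T.
  pose proof (sig_G op e HS _ _ _ (G_Rinv op e HS a') T) as T2. simpl in T2.
  rewrite <- (rdiv_uniq op e HS (op (rdiv op e HS x a) a') a' (rdiv op e HS x a) eq_refl) in T2.
  apply sig_sym. exact T2.
Qed.

Theorem mainTheorem2 (S : Type) (op : S -> S -> S) (e : S)
  (HS : is_right_loop op e) :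
  (forall g, normalizer (GSS op) (normalizer (GSS op) (GS op)) g <-> GSS op g)
  <->
  (congruence op (sigma op) /\
   forall y z h, is_fS op y z h -> forall x, sigma op x (h x)).
Proof.
  split.
  - intro HNN.
    assert (Kn : forall n, GSS op n -> sigma op (n e) e -> forall x, sigma op (n x) x).
    { intros n Gn Hn x.
      destruct (proj2 (HNN (Rmul op x)) (G_R op e x)) as [_ [C1 _]].
      destruct (C1 n (proj2 (N_char op e HS n) (conj Gn Hn))) as [h' [Hh' Eh']].
      apply (N_char op e HS) in Hh'. destruct Hh' as [Gh' Sh'].
      pose proof (Eh' e) as T. unfold Rmul in T. rewrite (lid op e HS) in T. rewrite T.
      pose proof (sig_G op e HS _ _ _ (G_R op e x) Sh') as T2. unfold Rmul in T2.
      rewrite (lid op e HS) in T2. exact T2. }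
    split.
    + split.
      * split. apply sig_refl. split. apply sig_sym. apply sig_trans.
      * split. exists (e, e). apply sig_refl.
        split. intros [a a'] [b b'] Ha Hb. simpl in *.
        apply (sig_trans _ _ (op a' b)).
        apply (sig_G op e HS (Rmul op b) a a' (G_R op e b) Ha).
        apply (shift op e HS Kn b b' Hb).
        split. exists (e, e). split. apply sig_refl. intros [a a'] _. unfold pair_op; simpl.
        rewrite !(lid op e HS), !(rid op e HS). auto.
        intros [a a'] [b b'] Ha Hb. simpl in *.
        exists (rdiv op e HS b a, rdiv op e HS b' a'). split. split.
        simpl. apply (sig_trans _ _ (rdiv op e HS b a')).
        apply (shift_div op e HS Kn a a' Ha).
        apply (sig_G op e HS _ _ _ (G_Rinv op e HS a') Hb).
        unfold pair_op; simpl. rewrite !rdiv_spec. reflexivity.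
        intros [Y Y'] _ HY. unfold pair_op in HY; simpl in HY. injection HY; intros E2 E1.
        f_equal; apply rdiv_uniq; auto.
    + intros y z h Hh x. apply sig_sym. apply Kn.
      apply (H_G op e HS). apply gen_X. exists y, z. exact Hh.
      rewrite (fS_e op e HS y z h Hh). apply sig_refl.
  - intros [Hc Hf].
    assert (Kn : forall n, GSS op n -> sigma op (n e) e -> forall x, sigma op (n x) x).
    { intros n Gn Hn x.
      destruct (DL op e HS n Gn) as [h [c [Hh Eh]]].
      assert (Ec : n e = c) by (rewrite Eh, (H_fix op e HS h Hh), (lid op e HS); reflexivity).
      destruct Hc as [_ [_ [Hcl _]]].
      pose proof (Hcl (h x, x) (c, e)) as T. unfold pair_op in T; simpl in T.
      rewrite (rid op e HS) in T. rewrite Eh. apply T.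
      apply sig_sym. apply (H_sigma op e HS Hf h Hh).
      rewrite <- Ec. exact Hn. }
    intro g. split. intros [Hg _]; exact Hg. intro Hg.
    destruct (G_inverse op e HS g Hg) as [gi [Hgi [E1 E2]]].
    split; auto. split.
    + intros h Hh. apply (N_char op e HS) in Hh. destruct Hh as [Gh Sh].
      exists (fun w => gi (h (g w))). split.
      * apply (N_char op e HS). split. apply gen_comp; auto. apply gen_comp; auto.
        simpl. pose proof (sig_G op e HS _ _ _ Hgi (Kn h Gh Sh (g e))) as T.
        rewrite E1 in T. exact T.
      * intro x. rewrite E2. reflexivity.
    + intros h' Hh'. apply (N_char op e HS) in Hh'. destruct Hh' as [Gh Sh].
      exists (fun w => g (h' (gi w))). split.
      * apply (N_char op e HS). split. apply gen_comp; auto. apply gen_comp; auto.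
        simpl. pose proof (sig_G op e HS _ _ _ Hg (Kn h' Gh Sh (gi e))) as T.
        rewrite E2 in T. exact T.
      * intro x. rewrite E1. reflexivity.
Qed.
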